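(* Each of the following families of functions $\omega_k\colon \mathbb{N}_0\to\mathbb{N}$, indexed by $k\in\mathbb{N}$, is a convex growth family: (1) $\omega_k(n)=k^n$; (2) $\omega_k(n)=2^{kn}$; (3) $\omega_k(n)=k^n\cdot n!$; (4) $\omega_k(n)=k^{n^2}$; (5) $\omega_k(n)=k^n (n!)^k$.
   Context: $\mathbb{N}=\{1,2,3,\dots\}$, $\mathbb{N}_0=\mathbb{N}\cup\{0\}$. A family $(\omega_k)_{k\in\mathbb{N}}$ of functions $\omega_k\colon\mathbb{N}_0\to\mathbb{N}$ is a growth family if for all $k\in\mathbb{N}$ and $n,m\in\mathbb{N}_0$: (W1) $\omega_k(0)=1$ and $\omega_k(n)\le\omega_{k+1}(n)$; (W2) $\omega_k(n)\omega_k(m)\le\omega_k(n+m)$; (W3) for every $k_1\in\mathbb{N}$ there is $k_2\ge k_1$ with $\omega_{k_2}(n)\ge 2^n\omega_{k_1}(n)$ for all $n\in\mathbb{N}_0$. A growth family is convex if for every $k_1$ one can choose $k_2\ge k_1$ as in (W3) such that in addition for every $k_3\ge k_2$ there exists $\alpha\in\,]0,1[$ with $\omega_{k_1}(n)^\alpha\omega_{k_3}(n)^{1-\alpha}\le\omega_{k_2}(n)$ for all $n\in\mathbb{N}_0$. *)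

(* Defs.v *)
From Stdlib Require Import Reals Arith.
Open Scope R_scope.

(* A family (omega_k)_{k in N}, N = {1,2,...}, of functions N_0 -> N is
   represented by omega : nat -> nat -> nat, where omega k n = omega_k(n);
   only indices k >= 1 are meaningful.  "Codomain N" is the condition
   0 < omega k n. *)

Definition growth_family (omega : nat -> nat -> nat) : Prop :=
  (forall k n, (1 <= k)%nat -> (0 < omega k n)%nat) /\
  (forall k, (1 <= k)%nat -> omega k 0%nat = 1%nat) /\
  (forall k n, (1 <= k)%nat -> (omega k n <= omega (S k) n)%nat) /\
  (forall k n m, (1 <= k)%nat -> (omega k n * omega k m <= omega k (n + m))%nat) /\
  (forall k1, (1 <= k1)%nat -> exists k2, (k1 <= k2)%nat /\
      forall n, (2 ^ n * omega k1 n <= omega k2 n)%nat).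

Definition convex_condition (omega : nat -> nat -> nat) : Prop :=
  forall k1, (1 <= k1)%nat -> exists k2, (k1 <= k2)%nat /\
    (forall n, (2 ^ n * omega k1 n <= omega k2 n)%nat) /\
    (forall k3, (k2 <= k3)%nat -> exists alpha : R, 0 < alpha < 1 /\
       forall n, Rpower (INR (omega k1 n)) alpha
                 * Rpower (INR (omega k3 n)) (1 - alpha)
                 <= INR (omega k2 n)).

Definition convex_growth_family (omega : nat -> nat -> nat) : Prop :=
  growth_family omega /\ convex_condition omega.

Definition omega1 (k n : nat) : nat := k ^ n.
Definition omega2 (k n : nat) : nat := 2 ^ (k * n).
Definition omega3 (k n : nat) : nat := k ^ n * fact n.
Definition omega4 (k n : nat) : nat := k ^ (n * n).
Definition omega5 (k n : nat) : nat := k ^ n * (fact n) ^ k.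

(* Main.v *)
Require Import Defs.
From Stdlib Require Import Reals Arith.
From Stdlib Require Import Lia Lra.

Lemma ln_le' (x y : R) : (0 < x)%R -> (x <= y)%R -> (ln x <= ln y)%R.
Proof. intros H [H1|H1]. left; apply ln_increasing; auto. subst; lra. Qed.

Lemma exp_le' (x y : R) : (x <= y)%R -> (exp x <= exp y)%R.
Proof. intros [H1|H1]. left; apply exp_increasing; auto. subst; lra. Qed.

Lemma conv_real (a b c e : nat) : (1 <= a)%nat -> (1 <= b)%nat ->
  (a ^ e * b <= c ^ S e)%nat ->
  (Rpower (INR a) (1 - / INR (S e)) * Rpower (INR b) (1 - (1 - / INR (S e)))
   <= INR c)%R.
Proof.
  intros Ha Hb H.
  assert (Hc : (1 <= c)%nat).
  { destruct c. simpl in H. assert (0 < a ^ e * b)%nat.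
    apply Nat.mul_pos_pos. apply Nat.neq_0_lt_0, Nat.pow_nonzero; lia. lia. lia. lia. }
  assert (Ra : (0 < INR a)%R) by (apply lt_0_INR; lia).
  assert (Rb : (0 < INR b)%R) by (apply lt_0_INR; lia).
  assert (Rc : (0 < INR c)%R) by (apply lt_0_INR; lia).
  apply le_INR in H. rewrite mult_INR, !pow_INR in H.
  apply ln_le' in H.
  2: { apply Rmult_lt_0_compat; auto; apply pow_lt; auto. }
  rewrite ln_mult, !ln_pow in H; auto. 2: apply pow_lt; auto.
  unfold Rpower. rewrite <- exp_plus. rewrite <- (exp_ln (INR c)) by auto.
  apply exp_le'.
  set (t := (/ INR (S e))%R).
  assert (HM : (INR (S e) * t = 1)%R).
  { unfold t. apply Rinv_r. apply not_0_INR. lia. }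
  assert (Ht : (0 <= t)%R).
  { unfold t. left. apply Rinv_0_lt_compat, lt_0_INR; lia. }
  rewrite S_INR in HM, H.
  set (A := ln (INR a)) in *. set (B := ln (INR b)) in *. set (C := ln (INR c)) in *.
  set (E := INR e) in *.
  apply (Rmult_le_compat_l t) in H; auto.
  replace ((1 - (1 - t)) * B)%R with (t * B)%R by ring.
  replace ((1 - t) * A + t * B)%R with (t * (E * A + B))%R.
  2: { replace (1 - t)%R with (t * E)%R by lra. ring. }
  replace C with (t * ((E + 1) * C))%R. exact H.
  replace (t * ((E + 1) * C))%R with (((E + 1) * t) * C)%R by ring. rewrite HM. ring.
Qed.

Open Scope nat_scope.

Lemma alpha_ok (e : nat) : 1 <= e -> (0 < 1 - / INR (S e) < 1)%R.
Proof.
  intro H. assert (H1 : (1 < INR (S e))%R).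
  { rewrite S_INR. assert (1 <= INR e)%R by (apply (le_INR 1); lia). lra. }
  split.
  - assert (/ INR (S e) < 1)%R. { rewrite <- Rinv_1. apply Rinv_lt_contravar; lra. } lra.
  - assert (0 < / INR (S e))%R. { apply Rinv_0_lt_compat; lra. } lra.
Qed.

Lemma powpos a n : 1 <= a -> 1 <= a ^ n.
Proof. intro. apply Nat.neq_0_lt_0, Nat.pow_nonzero; lia. Qed.

Lemma L1 a b c n e : a ^ e * b <= c ^ S e -> (a ^ n) ^ e * b ^ n <= (c ^ n) ^ S e.
Proof.
  intro H. rewrite <- !Nat.pow_mul_r, (Nat.mul_comm n e), (Nat.mul_comm n (S e)),
   !Nat.pow_mul_r, <- Nat.pow_mul_l. apply Nat.pow_le_mono_l. exact H.
Qed.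

Lemma base1 k1 k3 : 1 <= k1 -> k1 ^ S k3 * k3 <= (2 * k1) ^ S (S k3).
Proof.
  intro H. rewrite Nat.pow_mul_l. rewrite (Nat.pow_succ_r' k1 (S k3)).
  pose proof (Nat.pow_gt_lin_r 2 (S (S k3)) ltac:(lia)). pose proof (powpos k1 (S k3) H).
  set (x := k1 ^ S k3) in *. set (y := 2 ^ S (S k3)) in *. 
  apply Nat.le_trans with (x * y). apply Nat.mul_le_mono_l; lia.
  rewrite (Nat.mul_comm x y). apply Nat.mul_le_mono_l. nia.
Qed.

Lemma fact_mul n m : fact n * fact m <= fact (n + m).
Proof.
  induction n. simpl. lia.
  change (fact (S n)) with (S n * fact n). change (S n + m) with (S (n + m)).
  change (fact (S (n + m))) with (S (n + m) * fact (n + m)).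
  rewrite <- Nat.mul_assoc. apply Nat.mul_le_mono; lia.
Qed.

Lemma convex_of (w : nat -> nat -> nat) (k2f : nat -> nat) :
  (forall k n, 1 <= k -> 0 < w k n) ->
  (forall k1, 1 <= k1 -> k1 <= k2f k1 /\ forall n, 2 ^ n * w k1 n <= w (k2f k1) n) ->
  (forall k1 k3 n, 1 <= k1 -> k2f k1 <= k3 -> w k1 n ^ S k3 * w k3 n <= w (k2f k1) n ^ S (S k3)) ->
  convex_condition w.
Proof.
  intros Hpos HW3 Hc k1 Hk1. destruct (HW3 k1 Hk1) as [Hk2 HW].
  exists (k2f k1). split; [exact Hk2|]. split; [exact HW|].
  intros k3 Hk3. exists (1 - / INR (S (S k3)))%R. split.
  apply alpha_ok; lia.
  intro n. apply conv_real. apply Hpos; lia. apply Hpos; lia. apply Hc; auto.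
Qed.

Lemma fam1 : convex_growth_family omega1.
Proof.
  unfold omega1. split.
  - split; [|split; [|split; [|split]]].
    + intros. apply powpos; lia.
    + reflexivity.
    + intros. apply Nat.pow_le_mono_l; lia.
    + intros. rewrite Nat.pow_add_r. lia.
    + intros k1 H. exists (2 * k1). split. lia. intro n. rewrite Nat.pow_mul_l. lia.
  - apply (convex_of _ (fun k => 2 * k)).
    + intros. apply powpos; lia.
    + intros k1 H. split. lia. intro n. rewrite Nat.pow_mul_l. lia.
    + intros k1 k3 n H _. apply L1. apply base1; lia.
Qed.

Lemma fam2 : convex_growth_family omega2.
Proof.
  unfold omega2. split.
  - split; [|split; [|split; [|split]]].
    + intros. apply powpos; lia.
    + intros. rewrite Nat.mul_0_r. reflexivity.
    + intros. apply Nat.pow_le_mono_r; nia.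
    + intros. rewrite <- Nat.pow_add_r. apply Nat.pow_le_mono_r; nia.
    + intros k1 H. exists (S k1). split. lia. intro n. rewrite <- Nat.pow_add_r.
      apply Nat.pow_le_mono_r; nia.
  - apply (convex_of _ S).
    + intros. apply powpos; lia.
    + intros k1 H. split. lia. intro n. rewrite <- Nat.pow_add_r.
      apply Nat.pow_le_mono_r; nia.
    + intros k1 k3 n H H3. rewrite <- !Nat.pow_mul_r, <- Nat.pow_add_r.
      apply Nat.pow_le_mono_r; nia.
Qed.

Lemma fam3 : convex_growth_family omega3.
Proof.
  unfold omega3. pose proof lt_O_fact. split.
  - split; [|split; [|split; [|split]]].
    + intros. pose proof (powpos k n H0). specialize (H n). nia.
    + reflexivity.
    + intros. apply Nat.mul_le_mono_r, Nat.pow_le_mono_l; lia.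
    + intros. rewrite Nat.pow_add_r. pose proof (fact_mul n m).
      replace (k ^ n * fact n * (k ^ m * fact m)) with (k ^ n * k ^ m * (fact n * fact m)) by ring.
      apply Nat.mul_le_mono_l; lia.
    + intros k1 H1. exists (2 * k1). split. lia. intro n. rewrite Nat.pow_mul_l. lia.
  - apply (convex_of _ (fun k => 2 * k)).
    + intros. pose proof (powpos k n H0). specialize (H n). nia.
    + intros k1 H1. split. lia. intro n. rewrite Nat.pow_mul_l. lia.
    + intros k1 k3 n H1 _. rewrite !Nat.pow_mul_l. rewrite (Nat.pow_succ_r' (fact n) (S k3)).
      replace ((k1 ^ n) ^ S k3 * fact n ^ S k3 * (k3 ^ n * fact n))
        with ((k1 ^ n) ^ S k3 * k3 ^ n * (fact n * fact n ^ S k3)) by ring.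
      apply Nat.mul_le_mono_r. rewrite <- Nat.pow_mul_l, <- (Nat.pow_mul_l 2 k1 n). apply L1. apply base1; lia.
Qed.

Lemma fam4 : convex_growth_family omega4.
Proof.
  unfold omega4. split.
  - split; [|split; [|split; [|split]]].
    + intros. apply powpos; lia.
    + reflexivity.
    + intros. apply Nat.pow_le_mono_l; lia.
    + intros. rewrite <- Nat.pow_add_r. apply Nat.pow_le_mono_r; nia.
    + intros k1 H. exists (2 * k1). split. lia. intro n. rewrite Nat.pow_mul_l.
      apply Nat.mul_le_mono_r, Nat.pow_le_mono_r; nia.
  - apply (convex_of _ (fun k => 2 * k)).
    + intros. apply powpos; lia.
    + intros k1 H. split. lia. intro n. rewrite Nat.pow_mul_l.
      apply Nat.mul_le_mono_r, Nat.pow_le_mono_r; nia.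
    + intros k1 k3 n H _. apply L1. apply base1; lia.
Qed.

Lemma fam5 : convex_growth_family omega5.
Proof.
  unfold omega5. pose proof lt_O_fact as F.
  assert (FP : forall n k, 1 <= fact n ^ k) by (intros; apply powpos; apply F).
  split.
  - split; [|split; [|split; [|split]]].
    + intros. pose proof (powpos k n H). specialize (FP n k). nia.
    + intros. simpl. rewrite Nat.pow_1_l. reflexivity.
    + intros. apply Nat.mul_le_mono. apply Nat.pow_le_mono_l; lia.
      apply Nat.pow_le_mono_r. specialize (F n). lia. lia.
    + intros. rewrite Nat.pow_add_r.
      replace (k ^ n * fact n ^ k * (k ^ m * fact m ^ k)) with (k ^ n * k ^ m * (fact n * fact m) ^ k)
        by (rewrite Nat.pow_mul_l; ring).
      apply Nat.mul_le_mono_l, Nat.pow_le_mono_l, fact_mul.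
    + intros k1 H1. exists (2 * k1). split. lia. intro n. rewrite Nat.pow_mul_l.
      rewrite Nat.mul_assoc. apply Nat.mul_le_mono_l. apply Nat.pow_le_mono_r.
      specialize (F n). lia. lia.
  - apply (convex_of _ (fun k => 2 * k)).
    + intros. pose proof (powpos k n H). specialize (FP n k). nia.
    + intros k1 H1. split. lia. intro n. rewrite Nat.pow_mul_l.
      rewrite Nat.mul_assoc. apply Nat.mul_le_mono_l. apply Nat.pow_le_mono_r.
      specialize (F n). lia. lia.
    + intros k1 k3 n H1 H3. rewrite !Nat.pow_mul_l.
      replace ((k1 ^ n) ^ S k3 * (fact n ^ k1) ^ S k3 * (k3 ^ n * fact n ^ k3))
        with ((k1 ^ n) ^ S k3 * k3 ^ n * ((fact n ^ k1) ^ S k3 * fact n ^ k3)) by ring.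
      rewrite <- (Nat.pow_mul_l (2 ^ n)), <- (Nat.pow_mul_l 2 k1 n).
      apply Nat.mul_le_mono. apply L1. apply base1; lia.
      rewrite <- !Nat.pow_mul_r, <- Nat.pow_add_r. apply Nat.pow_le_mono_r.
      specialize (F n). lia. nia.
Qed.

Theorem proposition1p4 :
  convex_growth_family omega1 /\
  convex_growth_family omega2 /\
  convex_growth_family omega3 /\
  convex_growth_family omega4 /\
  convex_growth_family omega5.
Proof.
  repeat split; try apply fam1; try apply fam2; try apply fam3; try apply fam4; try apply fam5.
Qed.
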